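(* Let $X$ be a non-empty set, $A$ a non-empty subset of $X$, and $f,g\in\mathcal T_X(A)$. Then in the semigroup $\mathcal T_X(A)$: (i) $f\,\mathscr L\,g$ iff $f=g$, or $\operatorname{im}(f)=\operatorname{im}(g)$ and $A$ saturates both $\ker(f)$ and $\ker(g)$; (ii) $f\,\mathscr R\,g$ iff $\ker(f)=\ker(g)$; (iii) $f\,\mathscr H\,g$ iff $f=g$, or $\operatorname{im}(f)=\operatorname{im}(g)$ and $A$ saturates $\ker(f)=\ker(g)$; (iv) $f\,\mathscr D\,g$ iff $\ker(f)=\ker(g)$, or $\operatorname{rank}(f)=\operatorname{rank}(g)$ and $A$ saturates both $\ker(f)$ and $\ker(g)$; (v) $f\,\mathscr J\,g$ iff $\ker(f)=\ker(g)$ or $|Af|=\operatorname{rank}(f)=\operatorname{rank}(g)=|Ag|$. Further, $\mathscr D=\mathscr J$ in $\mathcal T_X(A)$ if and only if $A$ is finite or $A=X$.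
   Context: $\mathcal T_X$ is the semigroup of all maps $X\to X$ (maps written on the right, composed left to right). $\mathcal T_X(A)=\{f\in\mathcal T_X:\operatorname{im}(f)\subseteq A\}$. $\ker(f)=\{(x,y):xf=yf\}$, $\operatorname{rank}(f)=|\operatorname{im}(f)|$, $Af=\{xf:x\in A\}$. A set $B$ saturates an equivalence $\sigma$ if every $\sigma$-class contains an element of $B$. Green's relations are computed within the semigroup $\mathcal T_X(A)$ ($x\,\mathscr L\,y$ iff $T^1x=T^1y$, etc., with $T=\mathcal T_X(A)$). *)

(* Defs.v *)
From Stdlib Require Import List.

Section Defs.
Context {X : Type}.

Definition inT (A : X -> Prop) (f : X -> X) : Prop := forall x, A (f x).

(* maps written on the right, composed left to right: x(fg) = (xf)g *)
Definition mul (f g : X -> X) : X -> X := fun x => g (f x).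

(* Principal one-sided / two-sided ideals in T = T_X(A), via T^1 *)
(* T^1 f ⊆ T^1 g  iff  f ∈ T^1 g *)
Definition leL (A : X -> Prop) (f g : X -> X) : Prop :=
  f = g \/ exists h, inT A h /\ f = mul h g.
Definition leR (A : X -> Prop) (f g : X -> X) : Prop :=
  f = g \/ exists h, inT A h /\ f = mul g h.
Definition leJ (A : X -> Prop) (f g : X -> X) : Prop :=
  f = g \/ (exists h, inT A h /\ f = mul h g)
        \/ (exists h, inT A h /\ f = mul g h)
        \/ (exists h k, inT A h /\ inT A k /\ f = mul (mul h g) k).

Definition GreenL A f g := leL A f g /\ leL A g f.
Definition GreenR A f g := leR A f g /\ leR A g f.
Definition GreenH A f g := GreenL A f g /\ GreenR A f g.
Definition GreenD A f g := exists h, inT A h /\ GreenL A f h /\ GreenR A h g.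
Definition GreenJ A f g := leJ A f g /\ leJ A g f.

Definition im (f : X -> X) : X -> Prop := fun y => exists x, y = f x.
Definition imA (A : X -> Prop) (f : X -> X) : X -> Prop :=
  fun y => exists x, A x /\ y = f x.

Definition same_set (P Q : X -> Prop) : Prop := forall y, P y <-> Q y.
Definition same_ker (f g : X -> X) : Prop :=
  forall x y, f x = f y <-> g x = g y.

Definition saturates (A : X -> Prop) (f : X -> X) : Prop :=
  forall x, exists a, A a /\ f a = f x.

Definition equipotent (P Q : X -> Prop) : Prop :=
  exists (u : {x | P x} -> {y | Q y}) (v : {y | Q y} -> {x | P x}),
    (forall p, v (u p) = p) /\ (forall q, u (v q) = q).

Definition finite_set (A : X -> Prop) : Prop :=
  exists l : list X, forall x, A x -> In x l.

End Defs.

(* Main.v *)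
Require Import Defs.
From Stdlib Require Import List Arith Lia Classical ClassicalEpsilon FunctionalExtensionality.

Section Gen.
Context {X : Type}.

Definition cid {T} {P : T -> Prop} (e : exists x, P x) : {x | P x} :=
  constructive_indefinite_description P e.
Definition emi := excluded_middle_informative.

Lemma sig_eq (P : X -> Prop) (a b : {x | P x}) : proj1_sig a = proj1_sig b -> a = b.
Proof. destruct a, b; simpl; intros ->; f_equal; apply proof_irrelevance. Qed.

Definition le_card (P Q : X -> Prop) : Prop :=
  exists u : X -> X, (forall x, P x -> Q (u x)) /\
    (forall x y, P x -> P y -> u x = u y -> x = y).

Lemma bij_equi (P Q : X -> Prop) (h : X -> X) :
  (forall x, P x -> Q (h x)) -> (forall x y, P x -> P y -> h x = h y -> x = y) ->
  (forall y, Q y -> exists x, P x /\ h x = y) -> equipotent P Q.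
Proof.
  intros H1 H2 H3.
  exists (fun p => exist Q (h (proj1_sig p)) (H1 _ (proj2_sig p))).
  exists (fun q => exist P (proj1_sig (cid (H3 _ (proj2_sig q))))
                (proj1 (proj2_sig (cid (H3 _ (proj2_sig q)))))).
  split.
  - intros p; apply sig_eq; simpl.
    destruct (cid _) as [x [Px Hx]]; simpl. apply H2; auto. apply proj2_sig.
  - intros q; apply sig_eq; simpl.
    destruct (cid _) as [x [Px Hx]]; simpl. auto.
Qed.

Lemma equi_bij (P Q : X -> Prop) : equipotent P Q -> exists h : X -> X,
  (forall x, P x -> Q (h x)) /\ (forall x y, P x -> P y -> h x = h y -> x = y) /\
  (forall y, Q y -> exists x, P x /\ h x = y).
Proof.
  intros [u [v [Hvu Huv]]].
  exists (fun x => match emi (P x) with left H => proj1_sig (u (exist P x H)) | right _ => x end).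
  split; [|split].
  - intros x Px. destruct (emi (P x)); [apply proj2_sig|contradiction].
  - intros x y Px Py. destruct (emi (P x)); [|contradiction]. destruct (emi (P y)); [|contradiction].
    intros E. apply sig_eq in E. apply (f_equal v) in E. rewrite !Hvu in E.
    apply (f_equal (@proj1_sig _ _)) in E. exact E.
  - intros y Qy. exists (proj1_sig (v (exist Q y Qy))). split. apply proj2_sig.
    destruct (emi _) as [H|H]; [|destruct H; apply proj2_sig].
    assert (E : exist P (proj1_sig (v (exist Q y Qy))) H = v (exist Q y Qy)) by (apply sig_eq; reflexivity).
    rewrite E, Huv. reflexivity.
Qed.

Lemma equi_le (P Q : X -> Prop) : equipotent P Q -> le_card P Q.
Proof. intros H; destruct (equi_bij _ _ H) as [h [H1 [H2 _]]]; exists h; auto. Qed.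

Lemma equi_sym (P Q : X -> Prop) : equipotent P Q -> equipotent Q P.
Proof. intros [u [v [H1 H2]]]; exists v, u; auto. Qed.

Lemma equi_trans (P Q R : X -> Prop) : equipotent P Q -> equipotent Q R -> equipotent P R.
Proof.
  intros [u [v [H1 H2]]] [u' [v' [H1' H2']]].
  exists (fun p => u' (u p)), (fun r => v (v' r)). split; intros; [rewrite H1'; auto|rewrite H2; auto].
Qed.

Lemma same_equi (P Q : X -> Prop) : same_set P Q -> equipotent P Q.
Proof.
  intros H. apply (bij_equi _ _ (fun x => x)).
  - intros x; apply H.
  - auto.
  - intros y Qy; exists y; split; auto; apply H; auto.
Qed.

Lemma le_trans (P Q R : X -> Prop) : le_card P Q -> le_card Q R -> le_card P R.
Proof.
  intros [u [H1 H2]] [u' [H1' H2']]. exists (fun x => u' (u x)). split; auto.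
Qed.

Lemma le_sub (P Q : X -> Prop) : (forall x, P x -> Q x) -> le_card P Q.
Proof. intros H; exists (fun x => x); auto. Qed.

Lemma iter_P (P Q : X -> Prop) (u v : X -> X) :
  (forall x, P x -> Q (u x)) -> (forall x, Q x -> P (v x)) ->
  forall n y, P y -> P (Nat.iter n (fun t => v (u t)) y).
Proof. intros Hu Hv n; induction n; simpl; auto. Qed.

Lemma csb (P Q : X -> Prop) : le_card P Q -> le_card Q P -> equipotent P Q.
Proof.
  intros [u [Hu Hui]] [v [Hv Hvi]].
  set (C := fun x => exists n y, P y /\ ~ (exists q, Q q /\ v q = y) /\
              x = Nat.iter n (fun t => v (u t)) y).
  set (vinv := fun x => match emi (exists q, Q q /\ v q = x) with
                        left e => proj1_sig (cid e) | right _ => x end).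
  assert (Hvinv : forall x, (exists q, Q q /\ v q = x) -> Q (vinv x) /\ v (vinv x) = x).
  { intros x e; unfold vinv; destruct (emi _) as [e'|n]; [|contradiction].
    destruct (cid e') as [q [Qq Hq]]; simpl; auto. }
  assert (HnC : forall x, P x -> ~ C x -> exists q, Q q /\ v q = x).
  { intros x Px nC. apply NNPP; intros nE; apply nC. exists 0, x; simpl; auto. }
  assert (CP : forall x, C x -> P x).
  { intros x [n [y [Py [_ ->]]]]. apply (iter_P P Q); auto. }
  apply (bij_equi _ _ (fun x => if emi (C x) then u x else vinv x)).
  - intros x Px. destruct (emi (C x)); auto. apply Hvinv; auto.
  - assert (cross : forall x x', P x -> P x' -> C x -> ~ C x' -> u x = vinv x' -> False).
    { intros x x' Px Px' Cx nCx' E. apply nCx'.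
      destruct (Hvinv x' (HnC _ Px' nCx')) as [_ E2]. rewrite <- E2, <- E.
      destruct Cx as [n [y [Py [Hy ->]]]]. exists (S n), y; simpl; auto. }
    intros x x' Px Px'. destruct (emi (C x)), (emi (C x')); intros E.
    + auto.
    + exfalso; eauto.
    + exfalso; eauto.
    + destruct (Hvinv x (HnC _ Px n)) as [_ E1]. destruct (Hvinv x' (HnC _ Px' n0)) as [_ E2].
      rewrite <- E1, <- E2, E; auto.
  - intros q Qq. destruct (emi (C (v q))) as [Cv|nCv].
    + destruct Cv as [n [y [Py [Hy E]]]]. destruct n as [|m].
      * exfalso; apply Hy; exists q; auto.
      * simpl in E. set (t := Nat.iter m (fun t => v (u t)) y) in *.
        assert (Pt : P t) by (apply (iter_P P Q); auto).
        assert (Ct : C t) by (exists m, y; auto).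
        exists t; split; auto. destruct (emi (C t)); [|contradiction].
        symmetry; apply Hvi; auto.
    + exists (v q); split; auto. destruct (emi (C (v q))); [contradiction|].
      assert (e : exists q', Q q' /\ v q' = v q) by eauto.
      destruct (Hvinv _ e) as [Q1 E1]. apply Hvi; auto.
Qed.

Lemma pigeon (P Q : X -> Prop) (l : list X) :
  (forall x, P x -> Q x) -> (forall x, Q x -> In x l) -> le_card Q P ->
  forall x, Q x -> P x.
Proof.
  intros PQ Ql [u [Hu Hui]].
  set (dec := fun x y : X => emi (x = y)).
  set (lq := nodup dec (filter (fun x => if emi (Q x) then true else false) l)).
  assert (Hlq : forall x, In x lq <-> Q x).
  { intros x; unfold lq; rewrite nodup_In, filter_In. destruct (emi (Q x)); split; intuition; discriminate. }
  assert (Nq : NoDup lq) by apply NoDup_nodup.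
  assert (Np : NoDup (map u lq)).
  { apply NoDup_map_NoDup_ForallPairs; auto. intros a b Ha Hb; apply Hui; apply Hlq; auto. }
  assert (I : incl lq (map u lq)).
  { apply NoDup_length_incl; auto. rewrite length_map; auto.
    intros y Hy. apply in_map_iff in Hy. destruct Hy as [a [<- Ha]]. apply Hlq, PQ, Hu, Hlq, Ha. }
  intros x Qx. apply Hlq, I, in_map_iff in Qx. destruct Qx as [a [<- Ha]]. apply Hu, Hlq, Ha.
Qed.

End Gen.

Section Green.
Context {X : Type} (A : X -> Prop) (a0 : X) (Ha0 : A a0).

Lemma leL_char (f g : X -> X) :
  (forall x, exists a, A a /\ g a = f x) -> exists h, inT A h /\ f = mul h g.
Proof.
  intros H. exists (fun x => proj1_sig (cid (H x))). split.
  - intros x; exact (proj1 (proj2_sig (cid (H x)))).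
  - apply functional_extensionality; intros x; unfold mul.
    symmetry; exact (proj2 (proj2_sig (cid (H x)))).
Qed.

Lemma leR_char (f g : X -> X) : inT A f ->
  (forall x y, g x = g y -> f x = f y) -> exists h, inT A h /\ f = mul g h.
Proof.
  intros Tf H.
  exists (fun y => match emi (exists x, y = g x) with left e => f (proj1_sig (cid e)) | right _ => a0 end).
  split.
  - intros y; destruct (emi _); auto.
  - apply functional_extensionality; intros x; unfold mul.
    destruct (emi _) as [e|n]; [|exfalso; apply n; eauto].
    symmetry; apply H. exact (eq_sym (proj2_sig (cid e))).
Qed.

Lemma pw (f g : X -> X) : f = g -> forall x, f x = g x.
Proof. intros ->; auto. Qed.

Lemma sat_ker (f g : X -> X) : same_ker f g -> saturates A f -> saturates A g.
Proof. intros K S x; destruct (S x) as [a [Ha E]]; exists a; split; auto; apply K; auto. Qed.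

Lemma partL (f g : X -> X) : inT A f -> inT A g ->
  (GreenL A f g <-> f = g \/ (same_set (im f) (im g) /\ saturates A f /\ saturates A g)).
Proof.
  intros Tf Tg; split.
  - intros [[E|[h [Th Eh]]] [E'|[k [Tk Ek]]]]; auto.
    right. pose proof (pw _ _ Eh) as Ef. pose proof (pw _ _ Ek) as Eg. unfold mul in Ef, Eg.
    split; [|split].
    + intros y; split; intros [x ->]; [exists (h x)|exists (k x)]; auto.
    + intros x. exists (k (h x)); split; auto. rewrite <- Eg, <- Ef; auto.
    + intros x. exists (h (k x)); split; auto. rewrite <- Ef, <- Eg; auto.
  - intros [->|[S [Sf Sg]]]; [split; left; auto|].
    split; right; apply leL_char; intros x.
    + destruct (proj1 (S (f x)) (ex_intro _ x eq_refl)) as [y Ey].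
      destruct (Sg y) as [a [Ha E]]; exists a; split; auto; congruence.
    + destruct (proj2 (S (g x)) (ex_intro _ x eq_refl)) as [y Ey].
      destruct (Sf y) as [a [Ha E]]; exists a; split; auto; congruence.
Qed.

Lemma partR (f g : X -> X) : inT A f -> inT A g -> (GreenR A f g <-> same_ker f g).
Proof.
  intros Tf Tg; split.
  - intros [[E|[h [Th Eh]]] [E'|[k [Tk Ek]]]];
      try (rewrite E; intros x y; tauto); try (rewrite E'; intros x y; tauto).
    pose proof (pw _ _ Eh) as Ef. pose proof (pw _ _ Ek) as Eg. unfold mul in Ef, Eg.
    intros x y; split; intros E.
    + rewrite Eg, Eg, E; auto.
    + rewrite Ef, Ef, E; auto.
  - intros K; split; right; apply leR_char; auto; intros x y; apply K.
Qed.

Lemma partH (f g : X -> X) : inT A f -> inT A g ->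
  (GreenH A f g <-> f = g \/ (same_set (im f) (im g) /\ same_ker f g /\ saturates A f)).
Proof.
  intros Tf Tg; unfold GreenH; rewrite partL, partR by auto; split.
  - intros [[E|[S [Sf Sg]]] K]; auto.
  - intros [->|[S [K Sf]]].
    + split; auto. intros x y; tauto.
    + split; auto. right; split; auto; split; auto. apply (sat_ker f); auto.
Qed.

Lemma ker_equi (f g : X -> X) : same_ker f g -> equipotent (im f) (im g).
Proof.
  intros K.
  apply (bij_equi _ _ (fun y => match emi (exists x, y = f x) with
                                 left e => g (proj1_sig (cid e)) | right _ => y end)).
  - intros y Hy; destruct (emi _); [eexists; eauto|contradiction].
  - intros y y' Hy Hy'. destruct (emi _) as [e|]; [|contradiction].
    destruct (emi _) as [e'|]; [|contradiction].
    destruct (cid e) as [x Ex]; destruct (cid e') as [x' Ex']; simpl.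
    intros E; apply K in E; congruence.
  - intros y [x ->]. exists (f x); split; [eexists; eauto|].
    destruct (emi _) as [e|n]; [|exfalso; apply n; eauto].
    destruct (cid e) as [x' Ex']; simpl. apply K; auto.
Qed.

Lemma partD (f g : X -> X) : inT A f -> inT A g ->
  (GreenD A f g <-> same_ker f g \/
        (equipotent (im f) (im g) /\ saturates A f /\ saturates A g)).
Proof.
  intros Tf Tg; split.
  - intros [h [Th [Lfh Rhg]]]. apply partL in Lfh; auto. apply partR in Rhg; auto.
    destruct Lfh as [->|[S [Sf Sh]]]; auto.
    right; split; [|split; auto].
    + apply equi_trans with (im h); [apply same_equi; auto|apply ker_equi; auto].
    + apply (sat_ker h); auto.
  - intros [K|[Eq [Sf Sg]]].
    + exists f; split; auto. split; [apply partL; auto|apply partR; auto].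
    + destruct Eq as [u [v [Hvu Huv]]].
      set (h := fun x => proj1_sig (v (exist _ (g x) (ex_intro _ x eq_refl)))).
      assert (Th : inT A h).
      { intros x; unfold h. destruct (v _) as [y [z ->]]; simpl; auto. }
      assert (K : same_ker h g).
      { intros x y; unfold h; split; intros E.
        - apply sig_eq in E. apply (f_equal u) in E. rewrite !Huv in E.
          apply (f_equal (@proj1_sig _ _)) in E; exact E.
        - apply f_equal, f_equal, sig_eq; simpl; auto. }
      exists h; split; auto. split; [|apply partR; auto].
      apply partL; auto. right. split; [|split; auto].
      * intros y; split.
        -- intros Hy. destruct (u (exist _ y Hy)) as [z Hz] eqn:Eu. destruct Hz as [x Ex].
           exists x. unfold h.
           transitivity (proj1_sig (v (u (exist _ y Hy)))); [rewrite Hvu; reflexivity|].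
           apply f_equal, f_equal; rewrite Eu; apply sig_eq; simpl; auto.
        -- intros [x ->]; unfold h. exact (proj2_sig (v _)).
      * apply (sat_ker g); auto. intros x y; symmetry; apply K.
Qed.

End Green.

Section GreenJ.
Context {X : Type} (A : X -> Prop) (a0 : X) (Ha0 : A a0).

Definition kerle (g f : X -> X) := forall x y, g x = g y -> f x = f y.

Lemma imA_im (f : X -> X) : le_card (imA A f) (im f).
Proof. apply le_sub; intros y [x [_ ->]]; eexists; eauto. Qed.

Lemma kerle_im (f g : X -> X) : kerle g f -> le_card (im f) (im g).
Proof.
  intros K.
  exists (fun y => match emi (exists x, y = f x) with left e => g (proj1_sig (cid e)) | right _ => y end).
  split.
  - intros y Hy; destruct (emi _); [eexists; eauto|contradiction].
  - intros y y' Hy Hy'. destruct (emi _) as [e|]; [|contradiction].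
    destruct (emi _) as [e'|]; [|contradiction].
    destruct (cid e) as [x Ex]; destruct (cid e') as [x' Ex']; simpl.
    intros E; apply K in E; congruence.
Qed.

Lemma kerle_imA (f g : X -> X) : kerle g f -> le_card (imA A f) (imA A g).
Proof.
  intros K.
  exists (fun y => match emi (exists x, A x /\ y = f x) with left e => g (proj1_sig (cid e)) | right _ => y end).
  split.
  - intros y Hy; destruct (emi _) as [e|]; [|contradiction].
    exists (proj1_sig (cid e)); split; [exact (proj1 (proj2_sig (cid e)))|reflexivity].
  - intros y y' Hy Hy'. destruct (emi _) as [e|]; [|contradiction].
    destruct (emi _) as [e'|]; [|contradiction].
    destruct (cid e) as [x [Ax Ex]]; destruct (cid e') as [x' [Ax' Ex']]; simpl.
    intros E; apply K in E; congruence.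
Qed.

Lemma leJ_fwd (f g : X -> X) : inT A f -> inT A g -> leJ A f g ->
  f = g \/ kerle g f \/ le_card (im f) (imA A g).
Proof.
  intros Tf Tg [E|[[h [Th Eh]]|[[h [Th Eh]]|[h [k [Th [Tk Eh]]]]]]]; auto.
  - right; right. apply le_sub. intros y [x ->]. exists (h x); split; auto.
    rewrite Eh; reflexivity.
  - right; left. intros x y E. rewrite Eh; unfold mul; rewrite E; auto.
  - right; right. pose proof (pw _ _ Eh) as Ef; unfold mul in Ef.
    exists (fun y => match emi (exists x, y = f x) with left e => g (h (proj1_sig (cid e))) | right _ => y end).
    split.
    + intros y Hy; destruct (emi _); [|contradiction]. eexists; split; [|reflexivity]; auto.
    + intros y y' Hy Hy'. destruct (emi _) as [e|]; [|contradiction].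
      destruct (emi _) as [e'|]; [|contradiction].
      destruct (cid e) as [x Ex]; destruct (cid e') as [x' Ex']; simpl.
      intros E. rewrite Ex, Ex', Ef, Ef, E; auto.
Qed.

Lemma leJ_card (f g : X -> X) : inT A f -> inT A g -> le_card (im f) (imA A g) -> leJ A f g.
Proof.
  intros Tf Tg [u [Hu Hui]]. right; right; right.
  assert (H : forall x, exists a, A a /\ u (f x) = g a).
  { intros x. apply Hu. eexists; eauto. }
  exists (fun x => proj1_sig (cid (H x))).
  exists (fun y => match emi (exists z, im f z /\ u z = y) with left e => proj1_sig (cid e) | right _ => a0 end).
  split; [intros x; exact (proj1 (proj2_sig (cid (H x))))|]. split.
  - intros y; destruct (emi _) as [e|]; auto. destruct (cid e) as [z [[x Hx] Hz]]; simpl; rewrite Hx; auto.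
  - apply functional_extensionality; intros x; unfold mul.
    destruct (emi _) as [e|n].
    + destruct (cid e) as [z [Hz Ez]]; simpl. apply Hui; [eexists; eauto|auto|].
      rewrite Ez. exact (proj2 (proj2_sig (cid (H x)))).
    + exfalso; apply n. exists (f x); split; [eexists; eauto|].
      exact (proj2 (proj2_sig (cid (H x)))).
Qed.

Definition chain (f g : X -> X) := equipotent (imA A f) (im f) /\ equipotent (im f) (im g)
         /\ equipotent (im g) (imA A g).

Lemma chain_sym (f g : X -> X) : chain f g -> chain g f.
Proof. intros [H1 [H2 H3]]; split; [apply equi_sym; auto|split; apply equi_sym; auto]. Qed.

Lemma chain_KC (f g : X -> X) : kerle g f -> le_card (im g) (imA A f) -> chain f g.
Proof.
  intros K C. pose proof (kerle_im _ _ K) as I1. pose proof (kerle_imA _ _ K) as I2.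
  pose proof (imA_im f) as Af. pose proof (imA_im g) as Ag.
  split; [|split]; apply csb; eauto using le_trans.
Qed.

Lemma chain_CC (f g : X -> X) : le_card (im f) (imA A g) -> le_card (im g) (imA A f) -> chain f g.
Proof.
  intros C1 C2. pose proof (imA_im f) as Af. pose proof (imA_im g) as Ag.
  split; [|split]; apply csb; eauto using le_trans.
Qed.

Lemma partJ (f g : X -> X) : inT A f -> inT A g ->
  (GreenJ A f g <-> same_ker f g \/ chain f g).
Proof.
  intros Tf Tg; split.
  - intros [J1 J2]. apply leJ_fwd in J1; auto. apply leJ_fwd in J2; auto.
    destruct J1 as [E|[K1|C1]]; [subst; left; intros x y; tauto|..];
    (destruct J2 as [E|[K2|C2]]; [subst; left; intros x y; tauto|..]).
    + left; intros x y; split; auto.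
    + right; apply chain_KC; auto.
    + right; apply chain_sym, chain_KC; auto.
    + right; apply chain_CC; auto.
  - intros [K|[H1 [H2 H3]]].
    + split; right; right; left; apply (leR_char A a0 Ha0); auto; intros x y; apply K.
    + split; apply leJ_card; auto.
      * apply le_trans with (im g); apply equi_le; auto.
      * apply le_trans with (im f); apply equi_le; [apply equi_sym|apply equi_sym]; auto.
Qed.

End GreenJ.

Section Seq.
Context {X : Type}.
Fixpoint seqL (next : list X -> X) (n : nat) : list X :=
  match n with 0 => nil | S n => next (seqL next n) :: seqL next n end.

Lemma seqL_in next m n : m < n -> In (next (seqL next m)) (seqL next n).
Proof.
  induction n; intros H; [lia|]. simpl.
  destruct (Nat.eq_dec m n) as [->|ne]; [left; auto|right; apply IHn; lia].
Qed.

Lemma infinite_seq (A : X -> Prop) : ~ finite_set A ->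
  exists a : nat -> X, (forall n, A (a n)) /\ (forall m n, a m = a n -> m = n).
Proof.
  intros nF.
  assert (Hn : forall l : list X, exists x, A x /\ ~ In x l).
  { intros l; apply NNPP; intro H; apply nF; exists l; intros x Ax; apply NNPP; intro; apply H; eauto. }
  set (next := fun l => proj1_sig (cid (Hn l))).
  exists (fun n => next (seqL next n)). split.
  - intros n; exact (proj1 (proj2_sig (cid (Hn (seqL next n))))).
  - assert (Hnot : forall n, ~ In (next (seqL next n)) (seqL next n))
      by (intros n; exact (proj2 (proj2_sig (cid (Hn (seqL next n)))))).
    intros m n E. destruct (Nat.lt_trichotomy m n) as [lt|[eq|gt]]; auto.
    + exfalso; apply (Hnot n); rewrite <- E; apply seqL_in; auto.
    + exfalso; apply (Hnot m); rewrite E; apply seqL_in; auto.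
Qed.
End Seq.

Section Counter.
Context {X : Type} (A : X -> Prop) (a : nat -> X) (Ha : forall n, A (a n))
  (ainj : forall m n, a m = a n -> m = n) (z : X) (nz : ~ A z).

Definition idx (x : X) : option nat :=
  match emi (exists i, x = a i) with left e => Some (proj1_sig (cid e)) | right _ => None end.

Lemma idx_a i : idx (a i) = Some i.
Proof.
  unfold idx; destruct (emi _) as [e|n]; [|exfalso; apply n; eauto].
  f_equal; apply ainj; symmetry; exact (proj2_sig (cid e)).
Qed.

Lemma idx_some x i : idx x = Some i -> x = a i.
Proof.
  unfold idx; destruct (emi _) as [e|n]; [|discriminate].
  intros E; injection E; intros <-; exact (proj2_sig (cid e)).
Qed.

Lemma idx_z : idx z = None.
Proof.
  destruct (idx z) eqn:E; auto. apply idx_some in E. exfalso; apply nz; rewrite E; auto.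
Qed.

Definition fc (x : X) : X :=
  if emi (x = z) then a 0 else match idx x with Some i => a (S i) | None => a 1 end.
Definition gc (x : X) : X := match idx x with Some i => a (S i) | None => a 1 end.
Definition k1 (y : X) : X := match idx y with Some 0 => a 1 | Some i => a i | None => a 1 end.
Definition k2 (y : X) : X := match idx y with Some (S j) => a j | _ => a 0 end.

Lemma fc_a x : exists m, fc x = a m.
Proof. unfold fc; destruct (emi _); [eauto|destruct (idx x); eauto]. Qed.

Lemma T_fc : inT A fc.
Proof. intros x; destruct (fc_a x) as [m ->]; auto. Qed.
Lemma T_gc : inT A gc.
Proof. intros x; unfold gc; destruct (idx x); auto. Qed.
Lemma T_k1 : inT A k1.
Proof. intros x; unfold k1; destruct (idx x) as [[|]|]; auto. Qed.
Lemma T_k2 : inT A k2.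
Proof. intros x; unfold k2; destruct (idx x) as [[|]|]; auto. Qed.

Lemma J_fg : GreenJ A fc gc.
Proof.
  split.
  - right; right; right. exists fc, k2. split; [apply T_fc|split; [apply T_k2|]].
    apply functional_extensionality; intros x; unfold mul.
    destruct (fc_a x) as [m E]; rewrite E. unfold gc, k2; rewrite idx_a, idx_a; auto.
  - right; right; left. exists k1; split; [apply T_k1|].
    apply functional_extensionality; intros x; unfold mul, fc, gc.
    destruct (emi (x = z)) as [->|nzx].
    + rewrite idx_z; unfold k1; rewrite idx_a; auto.
    + destruct (idx x); unfold k1; rewrite idx_a; auto.
Qed.

Lemma notD_fg : ~ GreenD A fc gc.
Proof.
  intros D. apply (partD A (a 0) (Ha 0)) in D; [|apply T_fc|apply T_gc].
  assert (fz : fc z = a 0) by (unfold fc; destruct (emi (z = z)); [auto|congruence]).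
  assert (nza : a 0 <> z) by (intros E; apply nz; rewrite <- E; auto).
  assert (fa : fc (a 0) = a 1)
    by (unfold fc; destruct (emi (a 0 = z)); [contradiction|rewrite idx_a; auto]).
  destruct D as [K|[_ [Sf _]]].
  - assert (gc z = gc (a 0)) by (unfold gc; rewrite idx_z, idx_a; auto).
    apply K in H. rewrite fz, fa in H. apply ainj in H; discriminate.
  - destruct (Sf z) as [b [Ab E]]. rewrite fz in E. unfold fc in E.
    destruct (emi (b = z)) as [->|]; [contradiction|].
    destruct (idx b); apply ainj in E; discriminate.
Qed.
End Counter.

Theorem theorem5p4 (X : Type) (A : X -> Prop) (hA : exists a, A a) :
  (forall f g : X -> X, inT A f -> inT A g ->
     (GreenL A f g <->
        f = g \/ (same_set (im f) (im g) /\ saturates A f /\ saturates A g))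
  /\ (GreenR A f g <-> same_ker f g)
  /\ (GreenH A f g <->
        f = g \/ (same_set (im f) (im g) /\ same_ker f g /\ saturates A f))
  /\ (GreenD A f g <->
        same_ker f g \/
        (equipotent (im f) (im g) /\ saturates A f /\ saturates A g))
  /\ (GreenJ A f g <->
        same_ker f g \/
        (equipotent (imA A f) (im f) /\ equipotent (im f) (im g)
         /\ equipotent (im g) (imA A g))))
  /\
  ((forall f g : X -> X, inT A f -> inT A g -> (GreenD A f g <-> GreenJ A f g))
   <-> (finite_set A \/ forall x : X, A x)).
Proof.
  destruct hA as [a0 Ha0]. split.
  - intros f g Tf Tg. split; [apply (partL A); auto|]. split; [apply (partR A a0 Ha0); auto|].
    split; [apply (partH A a0 Ha0); auto|]. split; [apply (partD A a0 Ha0); auto|].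
    exact (partJ A a0 Ha0 f g Tf Tg).
  - split.
    + intros HDJ. destruct (classic (finite_set A)) as [F|nF]; auto.
      destruct (classic (forall x, A x)) as [T|nT]; auto. exfalso.
      apply not_all_ex_not in nT. destruct nT as [z nz].
      destruct (infinite_seq A nF) as [a [Ha ainj]].
      apply (notD_fg A a Ha ainj z nz). apply HDJ.
      * apply T_fc; auto.
      * apply T_gc; auto.
      * apply J_fg; auto.
    + intros Hfin f g Tf Tg. rewrite (partD A a0 Ha0 f g Tf Tg).
      rewrite (partJ A a0 Ha0 f g Tf Tg).
      assert (satS : forall h, saturates A h -> equipotent (imA A h) (im h)).
      { intros h S; apply same_equi; intros y; split.
        - intros [x [_ ->]]; eexists; eauto.
        - intros [x ->]. destruct (S x) as [b [Ab E]]; exists b; auto. }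
      assert (Ssat : forall h, inT A h -> equipotent (imA A h) (im h) -> saturates A h).
      { intros h Th Eq x.
        assert (Hs : forall y, im h y -> imA A h y).
        { destruct Hfin as [[l Hl]|Tot].
          - apply (pigeon _ _ l).
            + intros y [w [_ ->]]; eexists; eauto.
            + intros y [w ->]; apply Hl, Th.
            + apply equi_le, equi_sym, Eq.
          - intros y [w ->]; exists w; auto. }
        destruct (Hs (h x) (ex_intro _ x eq_refl)) as [b [Ab E]]; exists b; auto. }
      split.
      * intros [K|[E [Sf Sg]]]; [left; auto|right].
        split; [apply satS; auto|split; auto]. apply equi_sym, satS; auto.
      * intros [K|[E1 [E2 E3]]]; [left; auto|right].
        split; auto. split; apply Ssat; auto. apply equi_sym; auto.
Qed.
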